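(* Let $I\subseteq\mathbb{R}$ be an interval containing $0$ and let $f:I\to\mathbb{R}$ be such that $f|_{I\cap[0,\infty)}$ is convex and $f(-x)=-f(x)$ whenever $x$ and $-x$ both belong to $I$. Then for every family of points $a_1,\dots,a_n\in I$ and every family of weights $p_1,\dots,p_n\in[0,\infty)$ with $\sum_{k=1}^n p_k=1$ and \[ \sum_{k=1}^n p_k a_k+\min\{a_1,\dots,a_n\}\ge0, \] we have \[ f\left(\sum_{k=1}^n p_k a_k\right)\le\sum_{k=1}^n p_k f(a_k). \] *)

(* Defs.v *)
From mathcomp Require Import all_boot all_order all_algebra.
From mathcomp Require Import reals.
Set Implicit Arguments. Unset Strict Implicit. Unset Printing Implicit Defensive.
Import Order.TTheory GRing.Theory Num.Theory.
Local Open Scope ring_scope.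

Definition is_interval_set (R : realType) (I : R -> Prop) : Prop :=
  forall x y z : R, I x -> I z -> x <= y -> y <= z -> I y.

Definition convex_on (R : realType) (S : R -> Prop) (f : R -> R) : Prop :=
  forall (x y t : R), S x -> S y -> 0 <= t -> t <= 1 ->
    f (t * x + (1 - t) * y) <= t * f x + (1 - t) * f y.

(* Main.v *)
Require Import Defs.
From mathcomp Require Import all_boot all_order all_algebra.
From mathcomp Require Import reals.
From mathcomp Require Import ring lra.
Import Order.TTheory GRing.Theory Num.Theory.
Local Open Scope ring_scope.

Lemma jensen_fin (R : realType) (S : R -> Prop) (f : R -> R)
  (hS : forall x y t, S x -> S y -> 0 <= t -> t <= 1 -> S (t * x + (1 - t) * y))
  (hc : convex_on S f) (n : nat) :
  forall (c p : 'I_n.+1 -> R), (forall k, S (c k)) -> (forall k, 0 <= p k) ->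
  \sum_(k < n.+1) p k = 1 ->
  S (\sum_(k < n.+1) p k * c k) /\
  f (\sum_(k < n.+1) p k * c k) <= \sum_(k < n.+1) p k * f (c k).
Proof.
elim: n => [|n IH] c p hcS hp hs.
  move: hs; rewrite !big_ord1 => ->; rewrite !mul1r; split => //.
rewrite [\sum_(k < n.+2) p k * c k]big_ord_recr [\sum_(k < n.+2) p k * f (c k)]big_ord_recr /=.
move: hs; rewrite big_ord_recr /=.
set q := \sum_(i < n.+1) p (widen_ord (leqnSn n.+1) i) => hs.
have hq0 : 0 <= q by apply: sumr_ge0 => i _.
have hpl : p ord_max = 1 - q by lra.
have [q0|qpos] := eqVneq q 0.
  have h0 : forall i : 'I_n.+1, p (widen_ord (leqnSn n.+1) i) = 0.
    by move=> i; apply: (psumr_eq0P (P := predT) (F := fun j : 'I_n.+1 => p (widen_ord (leqnSn n.+1) j))) => // j _.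
  have z1 : \sum_(i < n.+1) p (widen_ord (leqnSn n.+1) i) * c (widen_ord (leqnSn n.+1) i) = 0.
    by apply: big1 => i _; rewrite h0 mul0r.
  have z2 : \sum_(i < n.+1) p (widen_ord (leqnSn n.+1) i) * f (c (widen_ord (leqnSn n.+1) i)) = 0.
    by apply: big1 => i _; rewrite h0 mul0r.
  by rewrite z1 z2 !add0r hpl q0 subr0 !mul1r.
have qgt : 0 < q by rewrite lt_neqAle eq_sym qpos hq0.
pose p' := fun i : 'I_n.+1 => p (widen_ord (leqnSn n.+1) i) / q.
have hs' : \sum_(i < n.+1) p' i = 1.
  by rewrite /p' -mulr_suml divff // gt_eqF.
have [IH1 IH2] := IH (fun i => c (widen_ord (leqnSn n.+1) i)) p'
  (fun i => hcS _) (fun i => divr_ge0 (hp _) hq0)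
  hs'.
have e1 : \sum_(i < n.+1) p (widen_ord (leqnSn n.+1) i) * c (widen_ord (leqnSn n.+1) i)
   = q * \sum_(i < n.+1) p' i * c (widen_ord (leqnSn n.+1) i).
  rewrite mulr_sumr; apply: eq_bigr => i _; rewrite /p'; field.
  by rewrite gt_eqF.
have e2 : \sum_(i < n.+1) p (widen_ord (leqnSn n.+1) i) * f (c (widen_ord (leqnSn n.+1) i))
   = q * \sum_(i < n.+1) p' i * f (c (widen_ord (leqnSn n.+1) i)).
  rewrite mulr_sumr; apply: eq_bigr => i _; rewrite /p'; field.
  by rewrite gt_eqF.
have hq1 : q <= 1 by have := hp ord_max; lra.
rewrite e1 e2 hpl; split; first by apply: hS.
apply: le_trans (hc _ _ _ IH1 (hcS _) hq0 hq1) _.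
by rewrite lerD2r ler_wpM2l.
Qed.

Theorem corollary2 (R : realType) (I : R -> Prop) (f : R -> R)
  (hI : is_interval_set I) (h0 : I 0)
  (hconv : convex_on (fun x => I x /\ 0 <= x) f)
  (hodd : forall x : R, I x -> I (- x) -> f (- x) = - f x)
  (n : nat) (a p : 'I_n.+1 -> R)
  (ha : forall k, I (a k))
  (hp : forall k, 0 <= p k)
  (hsum : \sum_(k < n.+1) p k = 1)
  (hmin : 0 <= \sum_(k < n.+1) p k * a k + \big[Num.min/a ord0]_(k < n.+1) a k) :
  f (\sum_(k < n.+1) p k * a k) <= \sum_(k < n.+1) p k * f (a k).
Proof.
set m := \big[Num.min/a ord0]_(k < n.+1) a k in hmin.
have hm : forall k, m <= a k by move=> k; exact: bigmin_le.
set s := \sum_(k < n.+1) p k * a k in hmin *.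
have sm : m <= s.
  have -> : m = \sum_(k < n.+1) p k * m by rewrite -mulr_suml hsum mul1r.
  by apply: ler_sum => k _; apply: ler_wpM2l.
have s0 : 0 <= s by lra.
have f0 : f 0 = 0.
  have h0' : I (- 0) by rewrite oppr0.
  have := hodd 0 h0 h0'; rewrite oppr0; lra.
pose S := fun x => I x /\ 0 <= x.
have hS : forall x y t, S x -> S y -> 0 <= t -> t <= 1 -> S (t * x + (1 - t) * y).
  move=> x y t [Ix x0] [Iy y0] t0 t1; split; last by nra.
  have [xy|yx] := leP x y.
    by apply: (hI x _ y) => //; nra.
  by apply: (hI y _ x) => //; nra.
have L : forall x y, 0 <= x -> x <= y -> I y -> y * f x <= x * f y.
  move=> x y x0 xy Iy.
  have [y0|ypos] := eqVneq y 0.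
    have -> : x = 0 by lra.
    by rewrite y0 !mul0r.
  have yg : 0 < y by rewrite lt_neqAle eq_sym ypos; lra.
  have t0 : 0 <= x / y by apply: divr_ge0; lra.
  have t1 : x / y <= 1 by rewrite ler_pdivrMr // mul1r.
  have := hconv y 0 (x / y) (conj Iy (ltW yg)) (conj h0 (lexx _)) t0 t1.
  rewrite f0 !mulr0 !addr0 divfK ?gt_eqF // => H.
  have := ler_wpM2l (ltW yg) H.
  by rewrite mulrA mulrCA divff ?gt_eqF // mulr1 mulrC.
pose c := fun k => if 0 <= a k then a k else 0.
pose b := fun k => if 0 <= a k then 0 else - a k.
have hcS : forall k, S (c k).
  move=> k; rewrite /S /c; case: ifP => // _; split => //.
have hab : forall k, a k = c k - b k.
  by move=> k; rewrite /c /b; case: ifP => _; rewrite ?subr0 ?opprK ?add0r.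
have hb0 : forall k, 0 <= b k.
  move=> k; rewrite /b; case: ifP => // /negbT; rewrite -ltNge => h; lra.
have hbs : forall k, b k <= s.
  move=> k; rewrite /b; case: ifP => // _; have := hm k; lra.
have [SC fC] := @jensen_fin _ S f hS hconv n c p hcS hp hsum.
set C := \sum_(k < n.+1) p k * c k in SC fC.
set B := \sum_(k < n.+1) p k * b k.
have hsCB : s = C - B.
  by rewrite /s /C /B -sumrB; apply: eq_bigr => k _; rewrite hab mulrBr.
have B0 : 0 <= B by apply: sumr_ge0 => k _; apply: mulr_ge0.
have Is : I s by case: SC => IC C0; apply: (hI 0 _ C) => //; lra.
have Ib : forall k, I (b k) by move=> k; apply: (hI 0 _ s).
have hfa : forall k, f (a k) = f (c k) - f (b k).
  move=> k; rewrite /c /b; case: ifP => h.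
    by rewrite f0 subr0.
  have e : a k = - (- a k) by rewrite opprK.
  have Ibk : I (- a k) by have := Ib k; rewrite /b h.
  by rewrite f0 add0r {1}e hodd // opprK.
have -> : \sum_(k < n.+1) p k * f (a k)
   = \sum_(k < n.+1) p k * f (c k) - \sum_(k < n.+1) p k * f (b k).
  by rewrite -sumrB; apply: eq_bigr => k _; rewrite hfa mulrBr.
have [sz|spos] := eqVneq s 0.
  have bz : forall k, b k = 0 by move=> k; have := hbs k; have := hb0 k; lra.
  have z : \sum_(k < n.+1) p k * f (b k) = 0.
    by apply: big1 => k _; rewrite bz f0 mulr0.
  have Bz : B = 0 by apply: big1 => k _; rewrite bz mulr0.
  have Cz : C = 0 by lra.
  rewrite z sz subr0 f0; move: fC; rewrite Cz f0 //.
have sg : 0 < s by rewrite lt_neqAle eq_sym spos.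
have k1 : s * (\sum_(k < n.+1) p k * f (b k)) <= B * f s.
  rewrite mulr_sumr /B mulr_suml; apply: ler_sum => k _.
  rewrite mulrCA -mulrA; apply: ler_wpM2l => //.
  by apply: L.
have k2 : C * f s <= s * f C by apply: L => //; [lra | case: SC].
have k3 : s * f C <= s * (\sum_(k < n.+1) p k * f (c k)) by apply: ler_wpM2l; lra.
rewrite -(ler_pM2l sg) mulrBr.
have : s * f s = C * f s - B * f s by rewrite hsCB mulrBl.
lra.
Qed.
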